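(* For every $\delta>0$ there exists $N_0$ such that for all $N\ge N_0$, all $\mathscr P\subseteq\{1,\dots,N-1\}$ and all $g\in C([0,1];\mathbb R)$, $$\gamma^{\mathbf 0}_{[-1,N+1]\setminus\mathscr P}\big(\|h_N-g\|_\infty<\delta\big)\le\exp\Big(-N\inf_h\mathscr E_N(h)\Big),$$ where the infimum is over all $h:\{-\frac1N,0,\frac1N,\dots,1,1+\frac1N\}\to\mathbb R$ with $\max_{0\le j\le N}|h(j/N)-g(j/N)|\le2\delta$.
   Context: $\mathcal H_{[-1,N+1]}(\phi)=\sum_{k=0}^{N}\frac12(\phi_{k+1}+\phi_{k-1}-2\phi_k)^2$. $\gamma^{\mathbf 0}_{[-1,N+1]\setminus\mathscr P}$ is the centred Gaussian probability measure on $\phi:\{-1,\dots,N+1\}\to\mathbb R$ proportional to $e^{-\mathcal H_{[-1,N+1]}(\phi)}\prod_{k\in\{1,\dots,N-1\}\setminus\mathscr P}d\phi_k\prod_{k\in\mathscr P\cup\{-1,0,N,N+1\}}\delta_0(d\phi_k)$. $h_N$ is the linear interpolation on $[0,1]$ of $h_N(k/N)=\phi_k/N^2$; $\|\cdot\|_\infty$ is the sup norm on $[0,1]$. $\mathscr E_N(h)=\frac12\sum_{j=0}^N\frac1N N^4\big(h(\frac{j+1}N)+h(\frac{j-1}N)-2h(\frac jN)\big)^2$, so that $\mathcal H_{[-1,N+1]}(\phi)=N\mathscr E_N(h_N)$. *)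

(* Defs.v *)
From HB Require Import structures.
From mathcomp Require Import all_boot all_order all_algebra.
From mathcomp Require Import all_classical all_reals all_analysis.
Set Implicit Arguments. Unset Strict Implicit. Unset Printing Implicit Defensive.
Import Order.TTheory GRing.Theory Num.Theory numFieldNormedType.Exports.
Local Open Scope ring_scope.
Local Open Scope classical_set_scope.

(* Fields phi : {-1,...,N+1} -> R are represented as functions int -> R;
   only the values at -1..N+1 matter. *)

Definition Hbilap {R : realType} (N : nat) (phi : int -> R) : R :=
  \sum_(0 <= k < N.+1)
    (2^-1 * (phi (k%:Z + 1) + phi (k%:Z - 1) - 2 * phi k%:Z) ^+ 2).

(* E_N(h), h given by its values h(j/N) =: h j, j = -1..N+1 *)
Definition EN {R : realType} (N : nat) (h : int -> R) : R :=
  2^-1 * \sum_(0 <= j < N.+1)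
    (N%:R^-1 * N%:R ^+ 4 * (h (j%:Z + 1) + h (j%:Z - 1) - 2 * h j%:Z) ^+ 2).

Definition upd {R : realType} (phi : int -> R) (k : nat) (x : R) : int -> R :=
  fun i => if i == k%:Z then x else phi i.

(* iterated Lebesgue integral over the coordinates listed in l
   (for nonnegative integrands this is the integral w.r.t. Lebesgue
   measure on R^l, by Tonelli) *)
Fixpoint iter_int {R : realType} (l : seq nat) (f : (int -> R) -> \bar R)
    (phi : int -> R) : \bar R :=
  match l with
  | [::] => f phi
  | k :: l' => (\int[@lebesgue_measure R]_x iter_int l' f (upd phi k x))%E
  end.

Definition free_sites (N : nat) (P : pred nat) : seq nat :=
  [seq k <- iota 1 N.-1 | ~~ P k].

(* gamma^0_{[-1,N+1]\P}(A) : pinned sites (P, -1, 0, N, N+1) are 0, density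
   proportional to exp(-H) w.r.t. Lebesgue measure on the free sites *)
Definition gamma0 {R : realType} (N : nat) (P : pred nat)
    (A : set (int -> R)) : R :=
  fine (iter_int (free_sites N P)
          (fun phi => ((\1_A phi) * expR (- Hbilap N phi))%:E) (fun _ => 0))
  / fine (iter_int (free_sites N P)
          (fun phi => (expR (- Hbilap N phi))%:E) (fun _ => 0)).

(* h_N : linear interpolation on [0,1] of h_N(k/N) = phi_k / N^2 *)
Definition hN {R : realType} (N : nat) (phi : int -> R) (t : R) : R :=
  let k := minn (Num.truncn (t * N%:R)) N.-1 in
  (phi k%:Z + (t * N%:R - k%:R) * (phi (k%:Z + 1) - phi k%:Z)) / N%:R ^+ 2.

Definition supnorm01 {R : realType} (f : R -> R) : R :=
  sup [set `|f t| | t in `[0, 1]].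

(* Main.v *)
Require Import Defs.
From HB Require Import structures.
From mathcomp Require Import all_boot all_order all_algebra.
From mathcomp Require Import all_classical all_reals all_analysis.
From mathcomp Require Import measurable_realfun.
From mathcomp Require Import ring lra.
Import Order.TTheory GRing.Theory Num.Theory numFieldNormedType.Exports.
Local Open Scope ring_scope.
Local Open Scope classical_set_scope.

Set Implicit Arguments. Unset Strict Implicit. Unset Printing Implicit Defensive.
Section shift.
Context {R : realType}.
Local Notation mu := (@lebesgue_measure R).

Lemma mshift (a : R) : measurable_fun [set: measurableTypeR R] (fun x : measurableTypeR R => (x + a : measurableTypeR R)).
Proof. exact: measurable_funD. Qed.

Lemma lebesgue_shift (a : R) (A : set R) : measurable A ->
  mu ((fun x : R => x + a) @^-1` A) = mu A.
Proof.
move=> mA.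
have := @lebesgue_measure_unique R
  (measure_function_pushforward__canonical__measure_function_Measure mu (mshift a)).
move=> /(_ _ A mA) /= ->; last first.
move=> _ [[b c]] _ <-.
rewrite /pushforward /=.
have -> : (fun x => x + a) @^-1` `]b, c] = `](b - a), (c - a)]%classic.
  by apply/seteqP; split => x /=; rewrite !in_itv /= ltrBlDr lerBrDr.
rewrite !lebesgue_measure_itv/= !lte_fin ltrD2r; case: ifP => // _.
by rewrite -!EFinD; congr (_%:E); ring.
by [].
Qed.

Import HBNNSimple.

Section shifted.
Variables (h : {nnsfun measurableTypeR R >-> R}) (a : R).
Definition hsh (x : measurableTypeR R) : R := h (x + a).

Let hsh_ge0 : forall x, (0 <= hsh x)%R.
Proof. by move=> x; rewrite /hsh. Qed.
HB.instance Definition _ := isNonNegFun.Build _ _ hsh hsh_ge0.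

Let hsh_fin : finite_set (range hsh).
Proof.
apply: (sub_finite_set _ (@fimfunP _ _ h)).
by move=> _ [x _ <-]; exists (x + a).
Qed.
HB.instance Definition _ := FiniteImage.Build _ _ hsh hsh_fin.

Let hsh_m : measurable_fun setT hsh.
Proof.
exact: (measurableT_comp (f := h) (measurable_funPT h) (mshift a)).
Qed.
HB.instance Definition _ := isMeasurableFun.Build _ _ _ _ hsh hsh_m.

Definition hsh_nnsfun : {nnsfun measurableTypeR R >-> R} := hsh.

Lemma sintegral_hsh : sintegral mu hsh_nnsfun = sintegral mu h.
Proof.
have E : (fun x => x%:E * mu (hsh_nnsfun @^-1` [set x]))%E =
         (fun x => x%:E * mu (h @^-1` [set x]))%E.
  apply: boolp.funext => y; congr (_ * _)%E.
  have -> : hsh_nnsfun @^-1` [set y] = (fun x => x + a) @^-1` (h @^-1` [set y]) by [].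
  by rewrite lebesgue_shift //; exact: (measurable_funPTI h (measurable_set1 y)).
rewrite /sintegral; exact: (congr1 (fun F : R -> \bar R => (\sum_(x \in [set: R]) F x)%E) E).
Qed.

End shifted.

Local Open Scope ereal_scope.
Lemma integral_shift_le (G : R -> \bar R) (t : R) : (forall x, 0 <= G x) ->
  \int[mu]_x G (x + t)%R <= \int[mu]_x G x.
Proof.
move=> G0; rewrite !ge0_integralTE //.
apply: ge_ereal_sup => _ [h /= hle <-].
apply: ereal_sup_ubound; exists (hsh_nnsfun h (- t)).
  by move=> x /=; rewrite /hsh; have := hle (x - t)%R; rewrite subrK.
exact: sintegral_hsh.
Qed.

Lemma integral_le_nm (F G : R -> \bar R) : (forall x, 0 <= F x) ->
  (forall x, F x <= G x) -> \int[mu]_x F x <= \int[mu]_x G x.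
Proof.
move=> F0 FG; have G0 x : 0 <= G x by apply: le_trans (FG x).
rewrite !ge0_integralTE //.
apply: ge_ereal_sup => _ [h /= hle <-].
apply: ereal_sup_ubound; exists h => //= x; exact: le_trans (hle x) (FG x).
Qed.

Lemma integral_scale_le (F : R -> \bar R) (c : R) : (0 < c)%R -> (forall x, 0 <= F x) ->
  \int[mu]_x (c%:E * F x) <= c%:E * \int[mu]_x F x.
Proof.
move=> c0 F0; have cF0 x : 0 <= c%:E * F x by rewrite mule_ge0 // lee_fin ltW.
rewrite !ge0_integralTE //.
apply: ge_ereal_sup => _ [h /= hle <-].
have ci0 : (0 <= c^-1)%R by rewrite invr_ge0 ltW.
set h' := scale_nnsfun h ci0.
have -> : sintegral mu h = c%:E * sintegral mu h'.
  rewrite /h' /scale_nnsfun.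
  rewrite (_ : sintegral mu (mul_nnsfun _ _) = sintegral mu (cst c^-1 \* h)%R); last first.
    by apply: eq_sintegral.
  by rewrite sintegralrM muleA -EFinM mulfV ?gt_eqF // mul1e.
apply: lee_wpmul2l; first by rewrite lee_fin ltW.
apply: ereal_sup_ubound; exists h' => //= x.
rewrite /h' /scale_nnsfun /= /mul_nnsfun /=.
have := hle x; rewrite -(@lee_pdivrMl _ c) //.
Qed.
End shift.

Section iter.
Context {R : realType}.
Local Notation mu := (@lebesgue_measure R).

Definition agree (l : seq nat) (phi psi : int -> R) :=
  forall i : int, i \notin map (fun k : nat => k%:Z) l -> psi i = phi i.

Lemma agree_cons k l phi psi x : agree l (upd phi k x) psi -> agree (k :: l) phi psi.
Proof.
move=> H i; rewrite /= inE negb_or => /andP[ik il].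
by rewrite H // /upd (negbTE ik).
Qed.

Local Open Scope ereal_scope.

Lemma iter_int_ge0 l (f : (int -> R) -> \bar R) phi : (forall psi, 0 <= f psi) ->
  0 <= iter_int l f phi.
Proof.
move=> f0; elim: l phi => [|k l IH] phi //=.
by apply: integral_ge0 => x _; exact: IH.
Qed.

Lemma iter_int_le l (f g : (int -> R) -> \bar R) phi : (forall psi, 0 <= f psi) ->
  (forall psi, agree l phi psi -> f psi <= g psi) ->
  iter_int l f phi <= iter_int l g phi.
Proof.
move=> f0; elim: l phi => [|k l IH] phi fg /=.
  by apply: fg => i.
apply: integral_le_nm => x; first exact: iter_int_ge0.
apply: IH => psi H; apply: fg; exact: agree_cons H.
Qed.

Lemma iter_int_scale l (f : (int -> R) -> \bar R) (c : R) phi : (0 < c)%R ->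
  (forall psi, 0 <= f psi) ->
  iter_int l (fun psi => c%:E * f psi) phi <= c%:E * iter_int l f phi.
Proof.
move=> c0 f0; elim: l phi => [|k l IH] phi //=.
have H := @integral_scale_le R (fun x => iter_int l f (upd phi k x)) c c0 (fun x => iter_int_ge0 l (upd phi k x) f0).
apply: le_trans; last exact: H.
apply: integral_le_nm => x; last exact: IH.
by apply: iter_int_ge0 => psi; rewrite mule_ge0 // lee_fin ltW.
Qed.

Lemma iter_int_local l (f : (int -> R) -> \bar R) phi psi :
  agree l phi psi -> iter_int l f phi = iter_int l f psi.
Proof.
elim: l phi psi => [|k l IH] phi psi H /=.
  by congr f; apply: boolp.funext => i; rewrite H.
congr (integral _ _ _); apply: boolp.funext => x; apply: IH => i.
rewrite /upd; case: ifP => // ik il; rewrite H //= inE negb_or ik.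
by [].
Qed.

Lemma iter_int_shift l (f : (int -> R) -> \bar R) (c : int -> R) phi :
  (forall psi, 0 <= f psi) ->
  iter_int l (fun psi => f (fun i => psi i - c i)%R) phi <=
  iter_int l f (fun i => phi i - c i)%R.
Proof.
move=> f0; elim: l phi => [|k l IH] phi //=.
apply: le_trans.
  apply: integral_le_nm => x; last exact: IH.
  by apply: iter_int_ge0.
have E x : (fun i => upd phi k x i - c i)%R = upd (fun i => phi i - c i)%R k (x + - c k%:Z)%R.
  by apply: boolp.funext => i; rewrite /upd; case: ifP => // /eqP ->.
under eq_integral do rewrite E.
apply: (@integral_shift_le R (fun y => iter_int l f (upd (fun i => phi i - c i)%R k y)) (- c k%:Z)%R).
by move=> y; exact: iter_int_ge0.
Qed.
End iter.

Section minim.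
Context {R : realType}.
Import ArrowAsProduct.

Lemma cont_proj (i : int) : continuous (fun phi : int -> R => phi i).
Proof. exact: (@proj_continuous int (fun _ => R) i). Qed.

Lemma cM (f g : (int -> R) -> R) : continuous f -> continuous g ->
  continuous (fun p => f p * g p).
Proof. by move=> cf cg x; exact: (@continuousM _ _ f g x (cf x) (cg x)). Qed.
Lemma cD (f g : (int -> R) -> R) : continuous f -> continuous g ->
  continuous (fun p => f p + g p).
Proof. by move=> cf cg x; exact: (@continuousD _ _ _ f g x (cf x) (cg x)). Qed.
Lemma cB (f g : (int -> R) -> R) : continuous f -> continuous g ->
  continuous (fun p => f p - g p).
Proof. by move=> cf cg x; exact: (@continuousB _ _ _ f g x (cf x) (cg x)). Qed.
Lemma cC (c : R) : continuous (fun _ : int -> R => c).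
Proof. by move=> x; exact: cst_continuous. Qed.

Lemma cX2 (f : (int -> R) -> R) : continuous f -> continuous (fun p => f p ^+ 2).
Proof.
move=> cf; have -> : (fun p => f p ^+ 2) = (fun p => f p * f p).
  by apply: boolp.funext => p; rewrite expr2.
exact: cM.
Qed.

Lemma cont_sum (s : seq nat) (F : nat -> (int -> R) -> R) :
  (forall k, continuous (F k)) -> continuous (fun phi => \sum_(k <- s) F k phi).
Proof.
move=> cF; elim: s => [|k s IH].
  have -> : (fun phi : int -> R => \sum_(k <- [::]) F k phi) = fun=> 0.
    by apply: boolp.funext => phi; rewrite big_nil.
  by move=> phi; exact: cst_continuous.
have -> : (fun phi : int -> R => \sum_(k0 <- k :: s) F k0 phi) =
   (fun phi => F k phi + \sum_(k0 <- s) F k0 phi).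
  by apply: boolp.funext => phi; rewrite big_cons.
by apply: cD; [exact: cF|exact: IH].
Qed.

Lemma cont_H N : continuous (@Hbilap R N).
Proof.
rewrite /Hbilap; move=> phi.
apply: (cont_sum (F := fun k phi => 2^-1 * (phi (k%:Z + 1) + phi (k%:Z - 1) - 2 * phi k%:Z) ^+ 2)).
move=> k; apply: cM; first exact: cC.
apply: cX2; (apply: cB; [apply: cD; exact: cont_proj| apply: cM; [exact: cC|exact: cont_proj]]).
Qed.

Lemma minimizer N (lo hi : int -> R) : (forall i, lo i <= hi i) ->
  exists2 x : int -> R, (forall i, lo i <= x i <= hi i) &
    forall y : int -> R, (forall i, lo i <= y i <= hi i) -> Hbilap N x <= Hbilap N y.
Proof.
move=> lohi.
set K := [set f : int -> R | forall i, `[lo i, hi i]%classic (f i)].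
have cK : compact K.
  have := @tychonoff int (fun _ => R) (fun i => `[lo i, hi i]%classic) (fun i => @segment_compact R (lo i) (hi i)).
  exact.
have K0 : K !=set0 by exists lo => i /=; rewrite in_itv /= lexx lohi.
have [x /set_mem Kx xmin] := compact_EVT_min K0 cK (continuous_subspaceT (@cont_H N)).
exists x; first by move=> i; have := Kx i; rewrite /= in_itv.
move=> y Ky; apply: xmin; rewrite inE => i /=; rewrite in_itv /=; exact: Ky.
Qed.
End minim.

Section alg.
Context {R : realType}.
Implicit Types (x y phi : int -> R).

Definition Dl (phi : int -> R) (k : nat) := phi (k%:Z + 1) + phi (k%:Z - 1) - 2 * phi k%:Z.
Definition Bil N x y := \sum_(0 <= k < N.+1) Dl x k * Dl y k.

Lemma HbilapE N phi : Hbilap N phi = \sum_(0 <= k < N.+1) 2^-1 * Dl phi k ^+ 2.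
Proof. by []. Qed.

Lemma H_add N x y : Hbilap N (fun i => x i + y i) = Hbilap N x + Bil N x y + Hbilap N y.
Proof.
rewrite !HbilapE /Bil -!big_split; apply: eq_bigr => k _ /=; by rewrite /Dl; field.
Qed.

Lemma H_ge0 N phi : 0 <= Hbilap N phi.
Proof. rewrite HbilapE; apply: sumr_ge0 => k _; rewrite mulr_ge0 ?sqr_ge0 //. Qed.

Lemma H_scale N (t : R) y : Hbilap N (fun i => t * y i) = t ^+ 2 * Hbilap N y.
Proof.
rewrite !HbilapE mulr_sumr; apply: eq_bigr => k _; by rewrite /Dl; field.
Qed.

Lemma Bil_scale N (t : R) x y : Bil N x (fun i => t * y i) = t * Bil N x y.
Proof.
rewrite /Bil mulr_sumr; apply: eq_bigr => k _; by rewrite /Dl; field.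
Qed.

Lemma foc N (lo hi : int -> R) x :
  (forall i, lo i <= x i <= hi i) ->
  (forall z : int -> R, (forall i, lo i <= z i <= hi i) -> Hbilap N x <= Hbilap N z) ->
  forall phi, (forall i, lo i <= phi i <= hi i) ->
  Hbilap N x + Hbilap N (fun i => phi i - x i) <= Hbilap N phi.
Proof.
move=> Kx xmin phi Kphi.
set y := fun i => phi i - x i.
have Hphi : Hbilap N phi = Hbilap N x + Bil N x y + Hbilap N y.
  rewrite -H_add; congr Hbilap; apply: boolp.funext => i; rewrite /y; ring.
rewrite Hphi -addrA lerD2l lerDr.
rewrite leNgt; apply/negP => B0.
set B := Bil N x y in B0 Hphi; set h := Hbilap N y in Hphi.
have h0 : 0 <= h by exact: H_ge0.
set t := - B / (h - B).
have hB : 0 < h - B by lra.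
have t0 : 0 < t by rewrite /t divr_gt0 // oppr_gt0.
have t1 : t <= 1 by rewrite /t ler_pdivrMr // mul1r; lra.
have Kz : forall i, lo i <= x i + t * y i <= hi i.
  move=> i; have := Kx i; have := Kphi i; rewrite /y => /andP[l1 h1] /andP[l2 h2].
  apply/andP; split; nra.
have := xmin _ Kz; rewrite H_add H_scale Bil_scale -/B -/h.
have : t * B + t ^+ 2 * h < 0.
  have -> : t * B + t ^+ 2 * h = t * (B + t * h) by ring.
  rewrite pmulr_rlt0 //.
  have -> : B + t * h = - B ^+ 2 / (h - B) by rewrite /t; field; lra.
  rewrite mulNr oppr_lt0 divr_gt0 //; nra.
lra.
Qed.
End alg.

Section grid.
Context {R : realType}.

Lemma truncn_nat (k : nat) : Num.truncn (k%:R : R) = k.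
Proof. by apply: truncn_def; rewrite lexx ltr_nat ltnSn. Qed.

Lemma hN_grid N (phi : int -> R) k : (0 < N)%N -> (k <= N)%N ->
  hN N phi (k%:R / N%:R) = phi k%:Z / N%:R ^+ 2.
Proof.
move=> N0 kN; rewrite /hN.
have N0' : (N%:R : R) != 0 by rewrite pnatr_eq0 -lt0n.
rewrite divfK // truncn_nat.
case: (ltnP k N) => kN'.
  have -> : minn k N.-1 = k by apply/minn_idPl; rewrite -ltnS prednK.
  by rewrite subrr mul0r addr0.
have kE : k = N by apply/eqP; rewrite eqn_leq kN kN'.
subst k; have -> : minn N N.-1 = N.-1 by apply/minn_idPr; exact: leq_pred.
case: N N0 {kN kN' N0'} => // n _ /=.
have -> : (n%:Z + 1)%R = n.+1%:Z by rewrite -addn1 PoszD.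
by rewrite -natr1 addrAC subrr add0r mul1r addrC subrK.
Qed.

Lemma abs_le_sum N (phi : int -> R) k : (k <= N)%N ->
  `|phi k%:Z| <= \sum_(0 <= j < N.+1) `|phi j%:Z|.
Proof.
move=> kN.
rewrite /index_iota subn0 (bigD1_seq k).
- by rewrite lerDl sumr_ge0.
- by rewrite mem_iota add0n ltnS kN.
- exact: iota_uniq.
Qed.

Lemma hN_bound N (phi : int -> R) : (0 < N)%N ->
  exists M, forall t, 0 <= t <= 1 -> `|hN N phi t| <= M.
Proof.
move=> N0; set S := \sum_(0 <= j < N.+1) `|phi j%:Z|.
exists ((S + N%:R * (S + S)) / N%:R ^+ 2) => t /andP[t0 t1].
have Np : (0 : R) < N%:R by rewrite ltr0n.
rewrite /hN normrM normfV normrX normr_nat.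
rewrite ler_pM2r ?invr_gt0 ?exprn_gt0 //.
set k := minn _ _.
have kN : (k <= N.-1)%N by rewrite /k geq_minr.
have k1N : (k.+1 <= N)%N by rewrite (leq_ltn_trans kN) // prednK.
have ak := abs_le_sum phi (leq_trans kN (leq_pred N)).
have ak1 := abs_le_sum phi k1N.
have -> : (k%:Z + 1)%R = k.+1%:Z by rewrite -addn1 PoszD.
have bk : `|t * N%:R - k%:R| <= N%:R.
  rewrite ler_norml; apply/andP; split.
    have : (k%:R : R) <= N%:R by rewrite ler_nat (leq_trans kN (leq_pred N)).
    have : 0 <= t * N%:R by rewrite mulr_ge0 // ltW.
    lra.
  have : t * N%:R <= N%:R by rewrite ler_piMl // ltW.
  have : (0:R) <= k%:R by rewrite ler0n.
  lra.
apply: (le_trans (ler_normD _ _)); apply: lerD => //.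
rewrite normrM; apply: ler_pM => //.
apply: (le_trans (ler_normB _ _)); exact: lerD.
Qed.

Lemma g_bound (g : R -> R) : {within `[0, 1], continuous g} ->
  exists M, forall t, 0 <= t <= 1 -> `|g t| <= M.
Proof.
move=> cg.
have [c1 _ h1] := EVT_max ler01 cg.
have [c2 _ h2] := EVT_min ler01 cg.
exists (`|g c1| + `|g c2|) => t t01.
have tin : t \in `[0, 1]%R by rewrite in_itv.
have := h1 _ tin; have := h2 _ tin.
rewrite ler_norml.
have := ler_norm (g c1); have := ler_norm (g c2).
have := ler_normr (g c1) (g c1); have := normr_ge0 (g c2); have := normr_ge0 (g c1).
have := ler_norm (- g c2); rewrite normrN.
have := ler_norm (- g c1); rewrite normrN.
move=> *; apply/andP; split; lra.
Qed.

Lemma grid N (phi : int -> R) (g : R -> R) (d : R) : (0 < N)%N ->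
  {within `[0, 1], continuous g} ->
  supnorm01 (fun t => hN N phi t - g t) < d ->
  forall k, (k <= N)%N -> `|phi k%:Z / N%:R ^+ 2 - g (k%:R / N%:R)| < d.
Proof.
move=> N0 cg hs k kN.
have [M1 hM1] := hN_bound phi N0.
have [M2 hM2] := g_bound cg.
have ub : has_ubound [set `|hN N phi t - g t| | t in `[0, 1]].
  exists (M1 + M2) => _ [t /= t01 <-].
  move: t01; rewrite in_itv /= => t01.
  apply: (le_trans (ler_normB _ _)); apply: lerD; [exact: hM1|exact: hM2].
apply: le_lt_trans hs; rewrite -hN_grid //.
apply: ub_le_sup => //; exists (k%:R / N%:R) => //.
rewrite /= in_itv /= divr_ge0 ?ler0n //= ler_pdivrMr ?ltr0n // mul1r ler_nat.
done.
Qed.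
End grid.

Section helpers.
Context {R : realType}.

Lemma box_of_abs (a b d M : R) : 0 < M -> `|a / M - b| < d ->
  M * (b - d) <= a <= M * (b + d).
Proof.
move=> M0; rewrite ltr_norml => /andP[h1 h2].
have aE : a = M * (a / M) by rewrite mulrC divfK // gt_eqF.
rewrite [a in _ <= a <= _]aE ler_pM2l // ler_pM2l //.
apply/andP; split; lra.
Qed.

Lemma abs_of_box (a b d M : R) : 0 < M -> M * (b - d) <= a <= M * (b + d) ->
  `|a / M - b| <= d.
Proof.
move=> M0 /andP[h1 h2].
have aE : a = M * (a / M) by rewrite mulrC divfK // gt_eqF.
rewrite [a in _ <= a]aE ler_pM2l // in h1.
rewrite [a in a <= _]aE ler_pM2l // in h2.
rewrite ler_norml; apply/andP; split; lra.
Qed.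

Lemma EN_scale N (x : int -> R) : (0 < N)%N ->
  N%:R * EN N (fun i => x i / N%:R ^+ 2) = Hbilap N x.
Proof.
move=> N0; have Nn : (N%:R : R) != 0 by rewrite pnatr_eq0 -lt0n.
rewrite /EN HbilapE mulrA (mulrC N%:R) -mulrA !mulr_sumr.
apply: eq_bigr => k _; rewrite /Dl; field.
by rewrite Nn.
Qed.

Lemma EN_ge0 N (h : int -> R) : 0 <= EN N h.
Proof.
rewrite /EN mulr_ge0 ?invr_ge0 //; apply: sumr_ge0 => k _.
by apply: mulr_ge0; [apply: mulr_ge0; [rewrite invr_ge0 ler0n|rewrite exprn_ge0 ?ler0n]|exact: sqr_ge0].
Qed.

Local Open Scope ereal_scope.
Lemma iter_int0 l (phi : int -> R) : iter_int l (fun _ => 0) phi = 0.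
Proof.
elim: l phi => [|k l IH] phi //=.
under eq_integral do rewrite IH.
exact: integral0.
Qed.
End helpers.

Unset Implicit Arguments.

Theorem lemma3p12 (R : realType) (delta : R) (hdelta : 0 < delta) :
  exists N0 : nat, forall (N : nat), (N0 <= N)%N ->
  forall (P : pred nat), (forall k, P k -> (1 <= k <= N.-1)%N) ->
  forall (g : R -> R), {within `[0, 1]%classic, continuous g} ->
    gamma0 N P [set phi | supnorm01 (fun t => hN N phi t - g t) < delta]
    <= expR (- (N%:R * inf [set EN N h | h in
                 [set h : int -> R | forall j : nat, (j <= N)%N ->
                    `|h j%:Z - g (j%:R / N%:R)| <= 2 * delta]])).
Proof.
exists 1%N => N N0 P HP g cg.
set A := [set phi | supnorm01 (fun t => hN N phi t - g t) < delta].
set C := [set h : int -> R | forall j : nat, (j <= N)%N ->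
                    `|h j%:Z - g (j%:R / N%:R)| <= 2 * delta].
set S := [set EN N h | h in C].
set F := free_sites N P.
have FN : forall k, k \in F -> (k <= N)%N.
  move=> k; rewrite /F /free_sites mem_filter mem_iota => /andP[_ /andP[_]].
  by rewrite add1n prednK // => /ltnW.
have Np : (0 : R) < N%:R ^+ 2 by rewrite exprn_gt0 // ltr0n.
pose num := iter_int F (fun phi : int -> R => ((\1_A phi) * expR (- Hbilap N phi))%:E) (fun _ => 0).
pose den := iter_int F (fun phi : int -> R => (expR (- Hbilap N phi))%:E) (fun _ => 0).
change (fine num / fine den <= expR (- (N%:R * inf S))).
have num0 : (0 <= num)%E.
  by apply: iter_int_ge0 => psi; rewrite lee_fin mulr_ge0 ?expR_ge0 ?indicE ?ler0n.
have den0 : (0 <= den)%E by apply: iter_int_ge0 => psi; rewrite lee_fin expR_ge0.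
have [[phi0 [Aphi0 ag0]]|noA] :=
    pselect (exists phi0, A phi0 /\ agree F (fun _ => 0) phi0); last first.
  have : (num <= 0)%E.
    rewrite -(iter_int0 F (fun _ => 0 : R)).
    apply: iter_int_le => [psi|psi agp].
      by rewrite lee_fin mulr_ge0 ?expR_ge0 ?indicE ?ler0n.
    rewrite indicE; case: (boolP (psi \in A)) => [/set_mem Ap|_].
      by exfalso; apply: noA; exists psi.
    by rewrite mul0r.
  move=> n0; have -> : num = 0%E by apply/eqP; rewrite eq_le n0 num0.
  by rewrite /= mul0r expR_ge0.
set isf := fun i : int => i \in [seq (k : nat)%:Z | k <- F].
pose lo i := if isf i then N%:R ^+ 2 * (g ((absz i)%:R / N%:R) - delta) else 0.
pose hi i := if isf i then N%:R ^+ 2 * (g ((absz i)%:R / N%:R) + delta) else 0.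
have lohi : forall i, lo i <= hi i.
  move=> i; rewrite /lo /hi; case: ifP => // _.
  by rewrite ler_pM2l //; lra.
have [x Kx xmin] := minimizer N lohi.
have x0 : forall i, ~~ isf i -> x i = 0.
  move=> i /negbTE ni; have := Kx i; rewrite /lo /hi ni => /andP[h1 h2].
  by apply/eqP; rewrite eq_le h1 h2.
have AK : forall psi, agree F (fun _ => 0) psi -> A psi ->
    forall i, lo i <= psi i <= hi i.
  move=> psi agp Ap i; rewrite /lo /hi.
  case: ifPn => [fi|nfi]; last by rewrite agp // lexx.
  have [k kF ->] := mapP fi.
  apply: box_of_abs => //.
  exact: (grid N0 cg Ap (FN _ kF)).
set c := expR (- Hbilap N x).
have c0 : 0 < c by exact: expR_gt0.
have key : (num <= c%:E * den)%E.
  have step1 : (num <= iter_int F (fun psi : int -> R => c%:E * (expR (- Hbilap N (fun i => psi i - x i)%R))%:E) (fun _ => 0%R))%E.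
    apply: iter_int_le => [psi|psi agp].
      by rewrite lee_fin mulr_ge0 ?expR_ge0 ?indicE ?ler0n.
    rewrite indicE; case: (boolP (psi \in A)) => [/set_mem Ap|_]; last first.
      by rewrite mul0r -EFinM lee_fin mulr_ge0 ?expR_ge0 // ltW.
    rewrite mul1r -EFinM lee_fin /c -expRD ler_expR.
    have := foc Kx xmin (AK psi agp Ap); lra.
  apply: (le_trans step1).
  have step2 : (iter_int F (fun psi : int -> R => c%:E * (expR (- Hbilap N (fun i => psi i - x i)%R))%:E) (fun _ => 0%R) <=
     c%:E * iter_int F (fun psi : int -> R => (expR (- Hbilap N (fun i => psi i - x i)%R))%:E) (fun _ => 0%R))%E.
    by apply: iter_int_scale => // psi; rewrite lee_fin expR_ge0.
  apply: (le_trans step2).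
  apply: lee_wpmul2l; first by rewrite lee_fin ltW.
  apply: le_trans.
    exact: (@iter_int_shift R F (fun psi => (expR (- Hbilap N psi))%:E) x (fun _ => 0)
               (fun psi => expR_ge0 _)).
  rewrite (@iter_int_local R F _ _ (fun _ => 0)) //.
  move=> i ni /=; rewrite x0 ?subrr //.
have Hx : N%:R * inf S <= Hbilap N x.
  rewrite -(EN_scale x N0) ler_pM2l ?ltr0n //.
  apply: ge_inf.
    by exists 0 => _ [h _ <-]; exact: EN_ge0.
  exists (fun i => x i / N%:R ^+ 2) => //.
  move=> j jN; case: (boolP (isf j%:Z)) => [fj|nfj].
    have := Kx j%:Z; rewrite /lo /hi fj /= => Kxj.
    apply: le_trans (abs_of_box Np Kxj) _; lra.
  rewrite x0 // mul0r.
  have := grid N0 cg Aphi0 jN; rewrite ag0 // mul0r => h.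
  by apply: ltW; apply: lt_le_trans h _; lra.
have c_le : c <= expR (- (N%:R * inf S)) by rewrite ler_expR lerN2.
apply: le_trans c_le.
move: num den num0 den0 key => n d n0 d0 nd.
case: d d0 nd => [r||] //= r0 nd; last by rewrite invr0 mulr0 ltW.
have [->|rn0] := eqVneq r 0; first by rewrite invr0 mulr0 ltW.
have rp : 0 < r by rewrite lt_neqAle eq_sym rn0 -lee_fin.
case: n n0 nd => [s||] //= s0; rewrite -EFinM lee_fin => nd.
by rewrite ler_pdivrMr.
Qed.
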